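(* Let $u,v$ be sufficiently large positive real numbers such that $v^{9/10}\le u\le2v$. Let $t>1$ be a real number that is not an integer expressible as a sum of two squares, such that $|u-t|\le v^{1/3}$. Then \[ \sum_{m:\,|m-u|>v^{1/2}}r(m)\Big(\frac1{m-t}-\frac{m}{m^2+1}\Big)=-\pi\log t+O(1). \]
   Context: $r(m)=\#\{(a,b)\in\mathbb Z^2:a^2+b^2=m\}$; the sum is over integers $m\ge1$. *)

(* Defs.v *)
From Stdlib Require Import Reals ZArith List.
From Coquelicot Require Import Coquelicot.
Open Scope R_scope.

Definition zrange (N : nat) : list Z :=
  map (fun k => (Z.of_nat k - Z.of_nat N)%Z) (seq 0 (2 * N + 1)).

(* r(m) = #{(a,b) in Z^2 : a^2 + b^2 = m}.  Any solution has |a|,|b| <= m,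
   so it suffices to enumerate pairs in [-m,m]^2. *)
Definition r2 (m : nat) : nat :=
  length (filter (fun p : Z * Z => Z.eqb (fst p * fst p + snd p * snd p) (Z.of_nat m))
                 (list_prod (zrange m) (zrange m))).

Definition term (u v t : R) (m : nat) : R :=
  if Nat.ltb 0 m then
    if Rlt_dec (sqrt v) (Rabs (INR m - u)) then
      INR (r2 m) * (1 / (INR m - t) - INR m / (INR m ^ 2 + 1))
    else 0
  else 0.

(* Main.v *)
Require Import Defs.
From Stdlib Require Import Reals ZArith List Lia Lra.
From Coquelicot Require Import Coquelicot.
Open Scope R_scope.

Fixpoint natsum (G : nat -> nat) (n : nat) : nat :=
  match n with O => O | S k => (natsum G k + G k)%nat end.

Definition sumZ (N : nat) (F : Z -> nat) : nat := list_sum (map F (zrange N)).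

Lemma zrange_S N : zrange (S N) =
  ((- Z.of_nat (S N))%Z :: zrange N ++ (Z.of_nat (S N) :: nil))%list.
Proof.
  unfold zrange.
  replace (2 * S N + 1)%nat with (S (S (2 * N + 1))) by lia.
  rewrite seq_S. cbn [seq]. rewrite <- seq_shift, map_app. cbn [map app]. rewrite map_map.
  f_equal. f_equal.
  - apply map_ext. intros; lia.
  - f_equal. lia.
Qed.

Lemma list_sum_app l1 l2 : list_sum (l1 ++ l2) = (list_sum l1 + list_sum l2)%nat.
Proof. induction l1; simpl; lia. Qed.

Lemma sumZ_S N F : sumZ (S N) F = (F (- Z.of_nat (S N))%Z + sumZ N F + F (Z.of_nat (S N)))%nat.
Proof. unfold sumZ. rewrite zrange_S. simpl. rewrite map_app, list_sum_app. simpl. lia. Qed.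

Lemma sumZ_0 F : sumZ 0 F = F 0%Z.
Proof. unfold sumZ. simpl. lia. Qed.

Lemma sumZ_ext N F G : (forall z, F z = G z) -> sumZ N F = sumZ N G.
Proof. intros H. unfold sumZ. f_equal. apply map_ext. auto. Qed.

Lemma sumZ_add N F G : sumZ N (fun z => F z + G z)%nat = (sumZ N F + sumZ N G)%nat.
Proof. induction N. rewrite !sumZ_0. lia. rewrite !sumZ_S. lia. Qed.

Lemma sumZ_zero N : sumZ N (fun _ => O) = O.
Proof. induction N. now rewrite sumZ_0. rewrite sumZ_S. lia. Qed.

Lemma sumZ_extend M N F : (M <= N)%nat ->
  (forall z, (Z.of_nat M < Z.abs z)%Z -> F z = O) -> sumZ N F = sumZ M F.
Proof.
  intros HMN HF. induction HMN. reflexivity.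
  rewrite sumZ_S, IHHMN, !HF; [lia| |]; lia.
Qed.

Lemma sumZ_even N F : (forall z, F (- z)%Z = F z) ->
  sumZ N F = (F 0%Z + 2 * natsum (fun k => F (Z.of_nat (S k))) N)%nat.
Proof.
  intros HF. induction N. rewrite sumZ_0. simpl. lia.
  rewrite sumZ_S, HF, IHN. cbn [natsum]. lia.
Qed.

Lemma natsum_swap_sumZ N K (F : nat -> Z -> nat) :
  natsum (fun m => sumZ N (F m)) K = sumZ N (fun z => natsum (fun m => F m z) K).
Proof.
  induction K. simpl. symmetry. apply sumZ_zero.
  simpl. rewrite IHK, <- sumZ_add. reflexivity.
Qed.

Lemma length_filter_sum {A} (p : A -> bool) l :
  length (filter p l) = list_sum (map (fun x => if p x then 1%nat else 0%nat) l).
Proof. induction l; simpl; auto. destruct (p a); simpl; lia. Qed.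

Lemma length_filter_prod {A B} (p : A * B -> bool) l1 l2 :
  length (filter p (list_prod l1 l2)) =
  list_sum (map (fun a => length (filter (fun b => p (a, b)) l2)) l1).
Proof.
  induction l1; simpl; auto.
  rewrite filter_app, length_app, IHl1. f_equal.
  clear. induction l2; simpl; auto. destruct (p (a, a0)); simpl; lia.
Qed.

Definition cntZ (N : nat) (P : Z -> Z -> bool) : nat :=
  sumZ N (fun a => sumZ N (fun b => if P a b then 1%nat else 0%nat)).

Lemma r2_cnt m : r2 m = cntZ m (fun a b => Z.eqb (a * a + b * b) (Z.of_nat m)).
Proof.
  unfold r2, cntZ, sumZ. rewrite length_filter_prod. f_equal. apply map_ext. intros a.
  rewrite length_filter_sum. reflexivity.
Qed.

Lemma r2_cnt_ext m N : (m <= N)%nat ->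
  r2 m = cntZ N (fun a b => Z.eqb (a * a + b * b) (Z.of_nat m)).
Proof.
  intros H. rewrite r2_cnt. unfold cntZ. symmetry.
  rewrite (sumZ_extend m N); auto.
  - apply sumZ_ext. intros a. apply sumZ_extend; auto.
    intros z Hz. destruct (Z.eqb_spec (a * a + z * z) (Z.of_nat m)); auto. nia.
  - intros a Ha. transitivity (sumZ N (fun _ => 0%nat)); [|apply sumZ_zero]. apply sumZ_ext. intros z.
    destruct (Z.eqb_spec (a * a + z * z) (Z.of_nat m)); auto. nia.
Qed.

Lemma natsum_eqb (x : Z) K : (0 <= x)%Z ->
  natsum (fun m => if Z.eqb x (Z.of_nat m) then 1%nat else 0%nat) K =
  if Z.ltb x (Z.of_nat K) then 1%nat else 0%nat.
Proof.
  intros Hx. induction K. simpl. destruct (Z.ltb_spec x 0); lia.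
  cbn [natsum]. rewrite IHK.
  destruct (Z.ltb_spec x (Z.of_nat K)), (Z.eqb_spec x (Z.of_nat K)),
     (Z.ltb_spec x (Z.of_nat (S K))); lia.
Qed.

Definition D (N : nat) : nat := cntZ N (fun a b => Z.leb (a * a + b * b) (Z.of_nat N)).

Lemma sum_r2_D N : natsum r2 (S N) = D N.
Proof.
  transitivity (natsum (fun m => cntZ N (fun a b => Z.eqb (a * a + b * b) (Z.of_nat m))) (S N)).
  { assert (forall K, (K <= S N)%nat -> natsum r2 K =
       natsum (fun m => cntZ N (fun a b => Z.eqb (a * a + b * b) (Z.of_nat m))) K) as HK.
    { induction K; intros; simpl; auto. rewrite IHK by lia. rewrite (r2_cnt_ext K N) by lia. auto. }
    apply HK; lia. }
  unfold cntZ. rewrite natsum_swap_sumZ. unfold D, cntZ. apply sumZ_ext. intros a.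
  rewrite natsum_swap_sumZ. apply sumZ_ext. intros b.
  rewrite natsum_eqb by nia.
  destruct (Z.ltb_spec (a * a + b * b) (Z.of_nat (S N))), (Z.leb_spec (a * a + b * b) (Z.of_nat N)); lia.
Qed.

Lemma count_sq c N : natsum (fun k => if Z.leb (Z.of_nat (S k) * Z.of_nat (S k)) (Z.of_nat c) then 1%nat else 0%nat) N
   = Nat.min N (Nat.sqrt c).
Proof.
  induction N. simpl. lia. cbn [natsum]. rewrite IHN.
  destruct (Z.leb_spec (Z.of_nat (S N) * Z.of_nat (S N)) (Z.of_nat c)) as [H|H].
  - assert (S N <= Nat.sqrt c)%nat. { apply Nat.sqrt_le_square. lia. } lia.
  - assert (~ (S N <= Nat.sqrt c))%nat. { rewrite <- Nat.sqrt_le_square. lia. } lia.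
Qed.

Lemma inner_count (c : Z) N : (c <= Z.of_nat N)%Z ->
  sumZ N (fun b => if Z.leb (b * b) c then 1%nat else 0%nat) =
  if Z.ltb c 0 then 0%nat else (2 * Nat.sqrt (Z.to_nat c) + 1)%nat.
Proof.
  intros Hc. rewrite sumZ_even by (intros; rewrite Z.mul_opp_opp; auto).
  rewrite Z.mul_0_l.
  destruct (Z.ltb_spec c 0).
  - destruct (Z.leb_spec 0 c); try lia.
    assert (natsum (fun k => if Z.leb (Z.of_nat (S k) * Z.of_nat (S k)) c then 1%nat else 0%nat) N = 0%nat) as ->; [|lia].
    clear Hc. induction N; cbn [natsum]; auto. rewrite IHN. destruct (Z.leb_spec (Z.of_nat (S N) * Z.of_nat (S N)) c); lia.
  - destruct (Z.leb_spec 0 c); try lia.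
    assert (c = Z.of_nat (Z.to_nat c)) as Ec by lia. revert Ec. generalize (Z.to_nat c). intros n Ec. subst c.
    rewrite count_sq.
    assert (Nat.sqrt n <= n)%nat by apply Nat.sqrt_le_lin. lia.
Qed.

Definition Qn (N : nat) : nat := natsum (fun k => Nat.sqrt (N - S k * S k)) N.

Lemma outer_sum M N : natsum (fun k => if Z.ltb (Z.of_nat M - Z.of_nat (S k) * Z.of_nat (S k)) 0 then 0%nat
      else (2 * Nat.sqrt (Z.to_nat (Z.of_nat M - Z.of_nat (S k) * Z.of_nat (S k))) + 1)%nat) N
  = (2 * natsum (fun k => Nat.sqrt (M - S k * S k)) N +
     natsum (fun k => if Z.leb (Z.of_nat (S k) * Z.of_nat (S k)) (Z.of_nat M) then 1%nat else 0%nat) N)%nat.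
Proof.
  induction N; cbn [natsum]; auto. rewrite IHN.
  destruct (Z.ltb_spec (Z.of_nat M - Z.of_nat (S N) * Z.of_nat (S N)) 0),
     (Z.leb_spec (Z.of_nat (S N) * Z.of_nat (S N)) (Z.of_nat M)); try lia.
  - replace (M - S N * S N)%nat with 0%nat by nia. change (Nat.sqrt 0) with 0%nat. lia.
  - replace (Z.to_nat (Z.of_nat M - Z.of_nat (S N) * Z.of_nat (S N))) with (M - S N * S N)%nat by nia. lia.
Qed.

Lemma D_formula N : D N = (1 + 4 * Nat.sqrt N + 4 * Qn N)%nat.
Proof.
  unfold D, cntZ.
  rewrite (sumZ_ext N _ (fun a => if Z.ltb (Z.of_nat N - a * a) 0 then 0%nat
        else (2 * Nat.sqrt (Z.to_nat (Z.of_nat N - a * a)) + 1)%nat)).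
  2:{ intros a. rewrite <- (inner_count (Z.of_nat N - a * a) N) by nia. apply sumZ_ext. intros b.
      destruct (Z.leb_spec (a * a + b * b) (Z.of_nat N)), (Z.leb_spec (b * b) (Z.of_nat N - a * a)); lia. }
  rewrite sumZ_even by (intros; rewrite Z.mul_opp_opp; auto).
  rewrite Z.mul_0_l, Z.sub_0_r. destruct (Z.ltb_spec (Z.of_nat N) 0); try lia.
  rewrite Nat2Z.id, outer_sum, count_sq. unfold Qn.
  assert (Nat.sqrt N <= N)%nat by apply Nat.sqrt_le_lin. lia.
Qed.

Lemma r2_0 : r2 0 = 1%nat.
Proof. reflexivity. Qed.

Lemma R_formula N : natsum (fun k => r2 (S k)) N = (4 * Nat.sqrt N + 4 * Qn N)%nat.
Proof.
  assert (forall K, natsum r2 (S K) = (1 + natsum (fun k => r2 (S k)) K)%nat) as HK.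
  { induction K; simpl; auto. simpl in IHK. lia. }
  pose proof (sum_r2_D N) as H. rewrite HK, D_formula in H. lia.
Qed.

Lemma asin_cont1 : continuity_pt asin 1.
Proof.
  unfold continuity_pt, continue_in, limit1_in, limit_in. simpl. unfold R_dist.
  intros eps Heps.
  pose proof PI_RGT_0 as HPI.
  set (e := Rmin (eps / 2) (PI / 4)).
  assert (He : 0 < e) by (unfold e; apply Rmin_glb_lt; lra).
  assert (He2 : e <= eps / 2) by apply Rmin_l.
  assert (He3 : e <= PI / 4) by apply Rmin_r.
  assert (Hc : cos e < 1).
  { rewrite <- cos_0. apply cos_decreasing_1; lra. }
  assert (Hc0 : 0 <= cos e) by (apply cos_ge_0; lra).
  exists (1 - cos e). split; [lra|].
  intros y [_ Hy].
  rewrite asin_1.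
  destruct (Rle_dec 1 y) as [H1|H1].
  - unfold asin. destruct (Rle_dec y (-1)); [lra|]. destruct (Rle_dec 1 y); [|lra].
    rewrite Rminus_diag, Rabs_R0. lra.
  - apply Rabs_def2 in Hy. destruct Hy as [Hy1 Hy2].
    pose proof (asin_bound y) as [Hb1 Hb2].
    assert (HA : PI / 2 - e < asin y).
    { destruct (Rlt_le_dec (PI / 2 - e) (asin y)) as [h|h]; auto.
      exfalso.
      assert (sin (asin y) <= sin (PI / 2 - e)).
      { destruct (Rle_lt_or_eq_dec _ _ h) as [h'|h'].
        - left. apply sin_increasing_1; lra.
        - rewrite h'. lra. }
      rewrite sin_asin in H by lra. rewrite sin_shift in H. lra. }
    rewrite Rabs_left1 by lra. lra.
Qed.

Definition Hh (y : R) : R := / 2 * (y * sqrt (1 - y * y) + asin y).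

Lemma Hh_0 : Hh 0 = 0.
Proof. unfold Hh. rewrite asin_0. ring. Qed.

Lemma Hh_1 : Hh 1 = PI / 4.
Proof. unfold Hh. rewrite asin_1. replace (1 - 1 * 1) with 0 by ring. rewrite sqrt_0. field. Qed.

Lemma Hh_deriv y : -1 < y < 1 -> is_derive Hh y (sqrt (1 - y * y)).
Proof.
  intros Hy.
  assert (Hp : 0 < 1 - y * y) by nra.
  assert (Hs : 0 < sqrt (1 - y * y)) by (apply sqrt_lt_R0; auto).
  assert (Hss : sqrt (1 - y * y) * sqrt (1 - y * y) = 1 - y * y) by (apply sqrt_sqrt; lra).
  assert (D1 : is_derive (fun y => y * sqrt (1 - y * y)) y
     (sqrt (1 - y * y) - y * y / sqrt (1 - y * y))).
  { auto_derive. lra. replace (1 + - (y * y)) with (1 - y * y) by ring. field. lra. }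
  assert (D2 : is_derive asin y (1 / sqrt (1 - y * y))).
  { apply is_derive_Reals. apply derive_pt_eq_1 with (pr := derivable_pt_asin y Hy).
    rewrite derive_pt_asin. unfold Rsqr. auto. }
  pose proof (is_derive_plus _ _ _ _ _ D1 D2) as D3.
  pose proof (is_derive_scal _ _ (/2) _ D3) as D4.
  assert (D5 : is_derive (fun x => / 2 * (x * sqrt (1 - x * x) + asin x)) y
     (/ 2 * ((sqrt (1 - y * y) - y * y / sqrt (1 - y * y)) + (1 / sqrt (1 - y * y))))) by exact D4.
  assert (E : / 2 * ((sqrt (1 - y * y) - y * y / sqrt (1 - y * y)) + (1 / sqrt (1 - y * y)))
     = sqrt (1 - y * y)).
  { field_simplify; [|lra].
    rewrite pow2_sqrt by lra. replace (1 - y * y - y ^ 2 + 1) with (2 * (sqrt (1 - y * y) * sqrt (1 - y * y))) by (rewrite Hss; ring). field. lra. }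
  rewrite E in D5. exact D5.
Qed.

Lemma Hh_cont y : 0 <= y <= 1 -> continuity_pt Hh y.
Proof.
  intros Hy. destruct (Req_dec y 1) as [->|Hne].
  - apply continuity_pt_filterlim. unfold Hh.
    apply (continuous_mult (fun _ => /2) (fun x => x * sqrt (1 - x * x) + asin x)).
    + apply continuous_const.
    + apply (continuous_plus (fun x => x * sqrt (1 - x * x)) asin).
      * apply (continuous_mult (fun x => x) (fun x => sqrt (1 - x * x))).
        -- apply continuous_id.
        -- apply (continuous_comp (fun x => 1 - x * x) sqrt).
           ++ apply continuity_pt_filterlim. reg.
           ++ apply continuity_pt_filterlim. apply continuity_pt_sqrt. lra.
      * apply continuity_pt_filterlim. apply asin_cont1.
  - apply derivable_continuous_pt.
    exists (sqrt (1 - y * y)). apply is_derive_Reals. apply Hh_deriv. lra.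
Qed.

Lemma Hh_mvt a b : 0 <= a <= b -> b <= 1 ->
  exists c, a <= c <= b /\ Hh b - Hh a = sqrt (1 - c * c) * (b - a).
Proof.
  intros Hab Hb.
  destruct (MVT_gen Hh a b (fun y => sqrt (1 - y * y))) as [c [Hc E]].
  - rewrite Rmin_left, Rmax_right by lra. intros x Hx. apply Hh_deriv. lra.
  - rewrite Rmin_left, Rmax_right by lra. intros x Hx. apply Hh_cont. lra.
  - rewrite Rmin_left, Rmax_right in Hc by lra. exists c. auto.
Qed.

Fixpoint sumr (F : nat -> R) (n : nat) : R :=
  match n with O => 0 | S k => sumr F k + F k end.

Lemma sumr_ext F G n : (forall k, (k < n)%nat -> F k = G k) -> sumr F n = sumr G n.
Proof. induction n; simpl; intros H; auto. rewrite IHn, H; auto. Qed.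

Lemma sumr_le F G n : (forall k, (k < n)%nat -> F k <= G k) -> sumr F n <= sumr G n.
Proof. induction n; simpl; intros H. lra. specialize (IHn (fun k Hk => H k ltac:(lia))). specialize (H n ltac:(lia)). lra. Qed.

Lemma sumr_nonneg F n : (forall k, (k < n)%nat -> 0 <= F k) -> 0 <= sumr F n.
Proof. induction n; simpl; intros H. lra. specialize (IHn (fun k Hk => H k ltac:(lia))). specialize (H n ltac:(lia)). lra. Qed.

Lemma sumr_plus F G n : sumr (fun k => F k + G k) n = sumr F n + sumr G n.
Proof. induction n; simpl; lra. Qed.

Lemma sumr_minus F G n : sumr (fun k => F k - G k) n = sumr F n - sumr G n.
Proof. induction n; simpl; lra. Qed.

Lemma sumr_scal c F n : sumr (fun k => c * F k) n = c * sumr F n.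
Proof. induction n; simpl; try rewrite IHn; ring. Qed.

Lemma sumr_tele F n : sumr (fun k => F (S k) - F k) n = F n - F O.
Proof. induction n; simpl; try rewrite IHn; ring. Qed.

Lemma sumr_abs F n : Rabs (sumr F n) <= sumr (fun k => Rabs (F k)) n.
Proof. induction n; simpl. rewrite Rabs_R0; lra. eapply Rle_trans. apply Rabs_triang. lra. Qed.

Lemma sumr_zero_tail F m n : (m <= n)%nat -> (forall k, (m <= k < n)%nat -> F k = 0) ->
  sumr F n = sumr F m.
Proof. induction 1 as [|n Hle IH]; intros H; auto. simpl. rewrite H by lia. rewrite IH; auto. lra. intros; apply H; lia. Qed.

Lemma INR_natsum G n : INR (natsum G n) = sumr (fun k => INR (G k)) n.
Proof. induction n; simpl natsum; simpl sumr; auto. rewrite plus_INR, IHn. auto. Qed.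

Lemma sqrt_nat_bounds c : INR (Nat.sqrt c) <= sqrt (INR c) < INR (Nat.sqrt c) + 1.
Proof.
  destruct (Nat.sqrt_spec c ltac:(lia)) as [H1 H2].
  apply le_INR in H1. apply lt_INR in H2. rewrite !mult_INR, S_INR in *.
  pose proof (pos_INR (Nat.sqrt c)).
  split.
  - rewrite <- (sqrt_square (INR (Nat.sqrt c))) by lra. apply sqrt_le_1_alt. lra.
  - rewrite <- (sqrt_square (INR (Nat.sqrt c) + 1)) by lra. apply sqrt_lt_1_alt.
    split; [apply pos_INR|lra].
Qed.

Definition Tn (N : nat) : R := sumr (fun k => sqrt (INR N - INR (S k) * INR (S k))) N.

Lemma Q_T N : 0 <= Tn N - INR (Qn N) <= INR (Nat.sqrt N).
Proof.
  unfold Qn, Tn. rewrite INR_natsum, <- sumr_minus.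
  assert (Hs : INR (Nat.sqrt N) = sumr (fun k => INR (if Z.leb (Z.of_nat (S k) * Z.of_nat (S k)) (Z.of_nat N) then 1%nat else 0%nat)) N).
  { rewrite <- INR_natsum, count_sq. f_equal. pose proof (Nat.sqrt_le_lin N). lia. }
  rewrite Hs. split.
  - apply sumr_nonneg. intros k _.
    destruct (le_lt_dec (S k * S k) N).
    + rewrite <- mult_INR, <- minus_INR by auto. pose proof (sqrt_nat_bounds (N - S k * S k)). lra.
    + replace (N - S k * S k)%nat with 0%nat by lia. change (Nat.sqrt 0) with 0%nat.
      rewrite sqrt_neg_0. change (INR 0%nat) with 0. lra. rewrite <- mult_INR. apply lt_INR in l. lra.
  - apply sumr_le. intros k _.
    destruct (le_lt_dec (S k * S k) N).
    + rewrite <- mult_INR, <- minus_INR by auto. pose proof (sqrt_nat_bounds (N - S k * S k)).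
      destruct (Z.leb_spec (Z.of_nat (S k) * Z.of_nat (S k)) (Z.of_nat N)); try lia. change (INR 1%nat) with 1. lra.
    + replace (N - S k * S k)%nat with 0%nat by lia. change (Nat.sqrt 0) with 0%nat.
      rewrite sqrt_neg_0. destruct (Z.leb_spec (Z.of_nat (S k) * Z.of_nat (S k)) (Z.of_nat N)); try lia. change (INR 0%nat) with 0. lra.
      rewrite <- mult_INR. apply lt_INR in l. lra.
Qed.

Lemma div_le_1 a b : 0 < b -> a <= b -> a / b <= 1.
Proof. intros. apply (Rmult_le_reg_r b); auto. field_simplify; lra. Qed.

Lemma T_pi N : -2 * sqrt (INR N) <= Tn N - INR N * PI / 4 <= 0.
Proof.
  destruct N as [|N0]. { unfold Tn; simpl. rewrite sqrt_0. lra. }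
  set (N := S N0).
  set (x := sqrt (INR N)).
  assert (HN : 0 < INR N) by (unfold N; rewrite S_INR; pose proof (pos_INR N0); lra).
  assert (Hx : 0 < x) by (apply sqrt_lt_R0; auto).
  assert (Hxx : x * x = INR N) by (apply sqrt_sqrt; lra).
  set (s := Nat.sqrt N).
  pose proof (sqrt_nat_bounds N) as Hs. fold s x in Hs.
  assert (Hsn : (s <= N)%nat) by apply Nat.sqrt_le_lin.
  set (g := fun y => sqrt (INR N - y * y)).
  assert (Step1 : Tn N = sumr (fun k => g (INR (S k))) s).
  { unfold Tn. apply sumr_zero_tail; auto. intros k Hk. unfold g.
    apply sqrt_neg_0. assert (INR s + 1 <= INR (S k)) by (rewrite <- S_INR; apply le_INR; lia).
    pose proof (pos_INR s). nra. }
  assert (Step2 : forall k, (k < s)%nat ->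
     g (INR (S k)) <= INR N * Hh (INR (S k) / x) - INR N * Hh (INR k / x) <= g (INR k)).
  { intros k Hk.
    assert (Hks : INR (S k) <= INR s) by (apply le_INR; lia).
    pose proof (pos_INR k) as Hk0. rewrite S_INR in *.
    destruct (Hh_mvt (INR k / x) ((INR k + 1) / x)) as [c [Hc E]].
    { split. apply Rdiv_le_0_compat; lra. apply Rmult_le_compat_r. left; apply Rinv_0_lt_compat; lra. lra. }
    { apply div_le_1; lra. }
    rewrite <- Rmult_minus_distr_l, E.
    assert (Hc1 : INR k <= x * c <= INR k + 1).
    { destruct Hc as [Hc1 Hc2]. split.
      - apply (Rmult_le_compat_l x) in Hc1; [|lra]. field_simplify in Hc1; lra.
      - apply (Rmult_le_compat_l x) in Hc2; [|lra]. field_simplify in Hc2; lra. }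
    assert (EE : INR N * (sqrt (1 - c * c) * ((INR k + 1) / x - INR k / x)) = sqrt (INR N - (x * c) * (x * c))).
    { replace (INR N - (x * c) * (x * c)) with ((x * x) * (1 - c * c)) by (rewrite <- Hxx; ring).
      rewrite sqrt_mult_alt by nra. rewrite sqrt_square by lra. rewrite <- Hxx. field. lra. }
    rewrite EE. unfold g. split; apply sqrt_le_1_alt; nra. }
  assert (Tele1 : sumr (fun k => INR N * Hh (INR (S k) / x) - INR N * Hh (INR k / x)) s
       = INR N * Hh (INR s / x)).
  { rewrite (sumr_tele (fun k => INR N * Hh (INR k / x))). simpl INR. unfold Rdiv. rewrite Rmult_0_l, Hh_0. ring. }
  assert (Tele2 : sumr (fun k => g (INR (S k)) - g (INR k)) s = g (INR s) - x).
  { rewrite (sumr_tele (fun k => g (INR k))). unfold g. simpl INR. rewrite Rmult_0_l, Rminus_0_r. auto. }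
  assert (Up : sumr (fun k => g (INR (S k))) s <= INR N * Hh (INR s / x)).
  { rewrite <- Tele1. apply sumr_le. intros k Hk. apply Step2; auto. }
  assert (Lo : INR N * Hh (INR s / x) <= sumr (fun k => g (INR (S k))) s + x).
  { rewrite <- Tele1. 
    assert (sumr (fun k => INR N * Hh (INR (S k) / x) - INR N * Hh (INR k / x)) s <= sumr (fun k => g (INR k)) s).
    { apply sumr_le. intros k Hk. apply Step2; auto. }
    assert (sumr (fun k => g (INR k)) s = sumr (fun k => g (INR (S k))) s - (g (INR s) - x)).
    { rewrite <- Tele2, <- sumr_minus. apply sumr_ext. intros; ring. }
    assert (0 <= g (INR s)) by (unfold g; apply sqrt_pos). lra. }
  destruct (Hh_mvt (INR s / x) 1) as [c [Hc E]].
  { split. apply Rdiv_le_0_compat; [apply pos_INR|lra]. apply div_le_1; lra. }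
  { lra. }
  rewrite Hh_1 in E.
  assert (Hsq : 0 <= sqrt (1 - c * c) <= 1).
  { split. apply sqrt_pos. apply Rle_trans with (sqrt 1); [apply sqrt_le_1_alt; nra | rewrite sqrt_1; lra]. }
  assert (Hd : INR N * (1 - INR s / x) <= x).
  { rewrite <- Hxx. field_simplify; [|lra]. nra. }
  assert (Hd0 : 0 <= 1 - INR s / x).
  { assert (INR s / x <= 1) by (apply div_le_1; lra). lra. }
  assert (0 <= INR N * (PI / 4 - Hh (INR s / x)) <= x).
  { rewrite E. split. apply Rmult_le_pos; [lra|]. apply Rmult_le_pos; lra.
    eapply Rle_trans; [|apply Hd]. apply Rmult_le_compat_l; [lra|].
    rewrite <- (Rmult_1_l (1 - INR s / x)) at 2. apply Rmult_le_compat_r; lra. }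
  rewrite Step1. fold x. split; nra.
Qed.

Definition Rcount (N : nat) : R := INR (natsum (fun k => r2 (S k)) N).

Lemma E_bound N : Rabs (Rcount N - PI * INR N) <= 8 * sqrt (INR N).
Proof.
  unfold Rcount. rewrite R_formula, plus_INR, !mult_INR.
  pose proof (Q_T N). pose proof (T_pi N). pose proof (sqrt_nat_bounds N).
  replace (INR 4) with 4 by (simpl; lra). apply Rabs_le. split; nra.
Qed.

Definition RG (F : nat -> R) (A B : nat) : R := sumr F B - sumr F A.

Lemma RG_nil F A : RG F A A = 0.
Proof. unfold RG; ring. Qed.

Lemma RG_S F A B : (A <= B)%nat -> RG F A (S B) = RG F A B + F B.
Proof. intros; unfold RG; simpl; ring. Qed.

Lemma RG_le F G A B : (A <= B)%nat -> (forall m, (A <= m < B)%nat -> F m <= G m) -> RG F A B <= RG G A B.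
Proof.
  induction 1 as [|B Hle IH]; intros H. rewrite !RG_nil; lra.
  rewrite !RG_S by auto. specialize (IH (fun m Hm => H m ltac:(lia))). specialize (H B ltac:(lia)). lra.
Qed.

Lemma RG_ext F G A B : (A <= B)%nat -> (forall m, (A <= m < B)%nat -> F m = G m) -> RG F A B = RG G A B.
Proof.
  induction 1 as [|B Hle IH]; intros H. rewrite !RG_nil; lra.
  rewrite !RG_S by auto. rewrite IH by (intros; apply H; lia). rewrite H by lia. reflexivity.
Qed.

Lemma RG_abs F A B : (A <= B)%nat -> Rabs (RG F A B) <= RG (fun m => Rabs (F m)) A B.
Proof.
  induction 1 as [|B Hle IH]. rewrite !RG_nil, Rabs_R0; lra.
  rewrite !RG_S by auto. eapply Rle_trans. apply Rabs_triang. lra.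
Qed.

Lemma RG_tele G A B : RG (fun m => G (S m) - G m) A B = G B - G A.
Proof. unfold RG. rewrite !sumr_tele. ring. Qed.

Lemma RG_plus F G A B : RG (fun m => F m + G m) A B = RG F A B + RG G A B.
Proof. unfold RG. rewrite !sumr_plus. ring. Qed.

Lemma RG_minus F G A B : RG (fun m => F m - G m) A B = RG F A B - RG G A B.
Proof. unfold RG. rewrite !sumr_minus. ring. Qed.

Lemma RG_scal c F A B : RG (fun m => c * F m) A B = c * RG F A B.
Proof. unfold RG. rewrite !sumr_scal. ring. Qed.

Lemma RG_nonneg F A B : (A <= B)%nat -> (forall m, (A <= m < B)%nat -> 0 <= F m) -> 0 <= RG F A B.
Proof.
  intros H1 H2. replace 0 with (RG (fun _ => 0) A B). apply RG_le; auto.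
  assert (Z0 : forall n, sumr (fun _ => 0) n = 0) by (induction n; simpl; lra).
  unfold RG. rewrite !Z0. ring.
Qed.

Definition rr (m : nat) : R := INR (r2 m).
Definition EE (n : nat) : R := Rcount n - PI * INR n.

Lemma EE_step a : EE (S a) - EE a = rr (S a) - PI.
Proof. unfold EE, Rcount, rr. simpl natsum. rewrite plus_INR, S_INR. ring. Qed.

Lemma abel_id f a k :
  RG (fun m => rr m * f m) (S a) (S (S a + k)) =
  PI * RG f (S a) (S (S a + k)) + EE (S a + k) * f (S a + k)%nat - EE a * f (S a)
   - RG (fun m => EE m * (f (S m) - f m)) (S a) (S a + k).
Proof.
  induction k.
  - rewrite Nat.add_0_r. rewrite (RG_S f), (RG_S (fun m => rr m * f m)), !RG_nil by lia.
    pose proof (EE_step a). replace (rr (S a)) with (EE (S a) - EE a + PI) by lra. ring.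
  - replace (S a + S k)%nat with (S (S a + k)) by lia.
    rewrite (RG_S (fun m => rr m * f m)) by lia. rewrite IHk.
    rewrite (RG_S f) by lia. rewrite (RG_S (fun m => EE m * (f (S m) - f m))) by lia.
    pose proof (EE_step (S a + k)). replace (rr (S (S a + k))) with (EE (S (S a + k)) - EE (S a + k) + PI) by lra. rewrite !(RG_S f) by lia. ring.
Qed.

Definition Err (f : nat -> R) (a B : nat) : R :=
  sqrt (INR B) * Rabs (f B) + sqrt (INR a) * Rabs (f (S a)) +
  RG (fun m => sqrt (INR m) * Rabs (f (S m) - f m)) (S a) B.

Lemma abel_bound f a B : (S a <= B)%nat ->
  Rabs (RG (fun m => rr m * f m) (S a) (S B) - PI * RG f (S a) (S B)) <= 8 * Err f a B.
Proof.
  intros HB. destruct (Nat.le_exists_sub (S a) B HB) as [k [Hk _]].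
  replace B with (S a + k)%nat by lia.
  rewrite abel_id.
  set (B' := (S a + k)%nat).
  assert (H1 : Rabs (EE B') <= 8 * sqrt (INR B')) by apply E_bound.
  assert (H2 : Rabs (EE a) <= 8 * sqrt (INR a)) by apply E_bound.
  assert (H3 : Rabs (RG (fun m => EE m * (f (S m) - f m)) (S a) B') <=
     8 * RG (fun m => sqrt (INR m) * Rabs (f (S m) - f m)) (S a) B').
  { eapply Rle_trans. apply RG_abs. unfold B'; lia. rewrite <- RG_scal. apply RG_le. unfold B'; lia.
    intros m _. rewrite Rabs_mult. rewrite <- Rmult_assoc. apply Rmult_le_compat_r. apply Rabs_pos. apply E_bound. }
  unfold Err. fold B'.
  replace (PI * RG f (S a) (S B') + EE B' * f B' - EE a * f (S a) -
      RG (fun m => EE m * (f (S m) - f m)) (S a) B' - PI * RG f (S a) (S B'))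
    with (EE B' * f B' - EE a * f (S a) - RG (fun m => EE m * (f (S m) - f m)) (S a) B') by ring.
  eapply Rle_trans. apply Rabs_triang. 
  eapply Rle_trans. apply Rplus_le_compat_r. unfold Rminus. apply Rabs_triang.
  rewrite !Rabs_Ropp, !Rabs_mult.
  pose proof (Rabs_pos (f B')). pose proof (Rabs_pos (f (S a))).
  assert (Rabs (EE B') * Rabs (f B') <= 8 * sqrt (INR B') * Rabs (f B')) by (apply Rmult_le_compat_r; auto).
  assert (Rabs (EE a) * Rabs (f (S a)) <= 8 * sqrt (INR a) * Rabs (f (S a))) by (apply Rmult_le_compat_r; auto).
  lra.
Qed.

Lemma ln_le_sub1 x : 0 < x -> ln x <= x - 1.
Proof. intros Hx. pose proof (exp_ineq1_le (ln x)). rewrite exp_ln in H by auto. lra. Qed.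

Lemma abs_le_inv x y : Rabs x <= y -> - y <= x <= y.
Proof. intros H. pose proof (Rle_abs x). pose proof (Rle_abs (- x)). rewrite Rabs_Ropp in H1. lra. Qed.

Lemma pt_log0 z : 0 < z -> 0 <= 1 / z - (ln (z + 1) - ln z) <= 1 / z - 1 / (z + 1).
Proof.
  intros Hz.
  assert (H1 : ln (z + 1) - ln z <= 1 / z).
  { rewrite <- ln_div by lra. pose proof (ln_le_sub1 ((z + 1) / z)).
    assert (0 < (z+1)/z) by (apply Rdiv_lt_0_compat; lra).
    replace ((z + 1) / z - 1) with (1 / z) in H by (field; lra). auto. }
  assert (H2 : 1 / (z + 1) <= ln (z + 1) - ln z).
  { pose proof (ln_le_sub1 (z / (z + 1))).
    assert (0 < z/(z+1)) by (apply Rdiv_lt_0_compat; lra).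
    rewrite ln_div in H by lra.
    replace (z / (z + 1) - 1) with (- (1 / (z + 1))) in H by (field; lra). lra. }
  lra.
Qed.

Lemma pt_log z : 0 < z -> Rabs (1 / z - (ln (z + 1) - ln z)) <= 1 / z - 1 / (z + 1).
Proof. intros Hz. pose proof (pt_log0 z Hz). apply Rabs_le. lra. Qed.

Lemma pt_h y : 1 <= y -> Rabs (y / (y ^ 2 + 1) - (ln (y + 1) - ln y)) <= 1 / y - 1 / (y + 1).
Proof.
  intros Hy. pose proof (pt_log0 y ltac:(lra)) as H.
  assert (E1 : y / (y ^ 2 + 1) = 1 / y - 1 / (y * (y ^ 2 + 1))) by (field; nra).
  assert (E2 : 0 <= 1 / (y * (y ^ 2 + 1))).
  { apply Rlt_le, Rdiv_lt_0_compat; nra. }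
  assert (E3 : 1 / (y * (y ^ 2 + 1)) <= 1 / y - 1 / (y + 1)).
  { replace (1 / y - 1 / (y + 1)) with (1 / (y * (y + 1))) by (field; lra).
    unfold Rdiv. rewrite !Rmult_1_l. apply Rinv_le_contravar; simpl; nra. }
  rewrite E1. apply Rabs_le. lra.
Qed.

Lemma RG_sandwich F K J A B : (A <= B)%nat ->
  (forall m, (A <= m < B)%nat -> Rabs (F m - (K (S m) - K m)) <= J m - J (S m)) ->
  Rabs (RG F A B - (K B - K A)) <= J A - J B.
Proof.
  intros HAB H. rewrite <- RG_tele.
  assert (RG (fun m => J m - J (S m)) A B = J A - J B).
  { transitivity (RG (fun m => -1 * (J (S m) - J m)) A B). apply RG_ext; auto; intros; ring.
    rewrite RG_scal, RG_tele. ring. }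
  rewrite <- H0. rewrite <- RG_minus. eapply Rle_trans. apply RG_abs; auto.
  apply RG_le; auto.
Qed.

Definition gf (t : R) (m : nat) : R := 1 / (INR m - t).
Definition hf (m : nat) : R := INR m / (INR m ^ 2 + 1).

Lemma sum_g_low t L : INR L < t ->
  Rabs (RG (gf t) 1 (S L) - (ln (t - INR L) - ln t)) <= 1 / (t - INR L).
Proof.
  intros Ht.
  assert (Ht0 : 0 < t) by (pose proof (pos_INR L); lra).
  assert (Hp : forall m, (1 <= m < S L)%nat -> Rabs (gf t m - (ln (t - INR (S m) + 1) - ln (t - INR m + 1)))
      <= - (1 / (t - INR m + 1)) - - (1 / (t - INR (S m) + 1))).
  { intros m [Hm1 Hm2]. unfold gf. rewrite S_INR.
    assert (INR m <= INR L) by (apply le_INR; lia).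
    pose proof (pt_log (t - INR m) ltac:(lra)) as P.
    replace (t - (INR m + 1) + 1) with (t - INR m) by ring.
    replace (1 / (INR m - t)) with (- (1 / (t - INR m))) by (field; lra).
    rewrite <- Rabs_Ropp.
    replace (- (- (1 / (t - INR m)) - (ln (t - INR m) - ln (t - INR m + 1))))
      with (1 / (t - INR m) - (ln (t - INR m + 1) - ln (t - INR m))) by ring.
    lra. }
  pose proof (RG_sandwich (gf t) (fun m => ln (t - INR m + 1)) (fun m => - (1 / (t - INR m + 1))) 1 (S L)
     ltac:(lia) Hp) as H. cbv beta in H.
  rewrite S_INR in H. simpl INR in H.
  replace (t - (INR L + 1) + 1) with (t - INR L) in H by ring.
  replace (t - 1 + 1) with t in H by ring.
  eapply Rle_trans. apply H.
  assert (0 < 1 / t) by (apply Rdiv_lt_0_compat; lra). lra.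
Qed.

Lemma sum_g_up t H N : t < INR H -> (H <= S N)%nat ->
  Rabs (RG (gf t) H (S N) - (ln (INR N + 1 - t) - ln (INR H - t))) <= 1 / (INR H - t).
Proof.
  intros Ht HN.
  assert (Hp : forall m, (H <= m < S N)%nat -> Rabs (gf t m - (ln (INR (S m) - t) - ln (INR m - t)))
      <= 1 / (INR m - t) - 1 / (INR (S m) - t)).
  { intros m [Hm1 Hm2]. unfold gf. rewrite S_INR.
    assert (INR H <= INR m) by (apply le_INR; lia).
    pose proof (pt_log (INR m - t) ltac:(lra)) as P.
    replace (INR m + 1 - t) with (INR m - t + 1) by ring. auto. }
  pose proof (RG_sandwich (gf t) (fun m => ln (INR m - t)) (fun m => 1 / (INR m - t)) H (S N)
     HN Hp) as P. cbv beta in P.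
  rewrite S_INR in P.
  eapply Rle_trans. apply P.
  assert (INR H <= INR (S N)) by (apply le_INR; auto). rewrite S_INR in H0.
  assert (0 < 1 / (INR N + 1 - t)) by (apply Rdiv_lt_0_compat; lra). lra.
Qed.

Lemma sum_h A B : (1 <= A)%nat -> (A <= S B)%nat ->
  Rabs (RG hf A (S B) - (ln (INR B + 1) - ln (INR A))) <= 1.
Proof.
  intros HA HAB.
  assert (Hp : forall m, (A <= m < S B)%nat -> Rabs (hf m - (ln (INR (S m)) - ln (INR m)))
      <= 1 / INR m - 1 / INR (S m)).
  { intros m [Hm1 Hm2]. unfold hf. rewrite S_INR.
    assert (1 <= INR m) by (change 1 with (INR 1); apply le_INR; lia).
    apply pt_h; auto. }
  pose proof (RG_sandwich hf (fun m => ln (INR m)) (fun m => 1 / INR m) A (S B) HAB Hp) as P.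
  cbv beta in P. rewrite S_INR in P.
  eapply Rle_trans. apply P.
  assert (1 <= INR A) by (change 1 with (INR 1); apply le_INR; lia).
  assert (0 < 1 / (INR B + 1)) by (apply Rdiv_lt_0_compat; pose proof (pos_INR B); lra).
  assert (1 / INR A <= 1).
  { unfold Rdiv. rewrite Rmult_1_l. rewrite <- Rinv_1. apply Rinv_le_contravar; lra. }
  lra.
Qed.

Lemma div_le_div p q r s : 0 < q -> 0 < s -> p * s <= r * q -> p / q <= r / s.
Proof.
  intros Hq Hs H. apply (Rmult_le_reg_r (q * s)). nra.
  replace (p / q * (q * s)) with (p * s) by (field; lra).
  replace (r / s * (q * s)) with (r * q) by (field; lra). auto.
Qed.

Lemma sqrt_facts y : 0 < y -> 0 < sqrt y /\ sqrt y * sqrt y = y.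
Proof. intros. split. apply sqrt_lt_R0; auto. apply sqrt_sqrt; lra. Qed.

Lemma hpt1 y : 1 <= y -> sqrt y * Rabs (y / (y ^ 2 + 1)) <= 1.
Proof.
  intros Hy. destruct (sqrt_facts y ltac:(lra)) as [Ha Haa]. set (a := sqrt y) in *.
  assert (1 <= a). { unfold a. rewrite <- sqrt_1. apply sqrt_le_1_alt. lra. }
  rewrite Rabs_pos_eq by (apply Rlt_le, Rdiv_lt_0_compat; nra).
  rewrite <- Haa. unfold Rdiv. rewrite <- Rmult_assoc.
  replace 1 with ((a * a * a) * / (a * a * a)) at 2 by (field; lra).
  change (a * (a * a) * / ((a * a) ^ 2 + 1) <= (a * a * a) / (a * a * a)). 
  apply div_le_div. simpl; nra. nra. simpl; nra.
Qed.

Lemma hpt2 y : 1 <= y ->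
  sqrt y * Rabs ((y + 1) / ((y + 1) ^ 2 + 1) - y / (y ^ 2 + 1)) <= 2 * (1 / sqrt y - 1 / sqrt (y + 1)).
Proof.
  intros Hy. destruct (sqrt_facts y ltac:(lra)) as [Ha Haa]. destruct (sqrt_facts (y + 1) ltac:(lra)) as [Hb Hbb].
  set (a := sqrt y) in *. set (b := sqrt (y + 1)) in *.
  assert (1 <= a). { unfold a. rewrite <- sqrt_1. apply sqrt_le_1_alt. lra. }
  assert (a <= b). { unfold a, b. apply sqrt_le_1_alt. lra. }
  assert (HD : Rabs ((y + 1) / ((y + 1) ^ 2 + 1) - y / (y ^ 2 + 1)) <= 1 / (y * (y + 1))).
  { replace ((y + 1) / ((y + 1) ^ 2 + 1) - y / (y ^ 2 + 1)) with
      (- ((y * y + y - 1) / ((y ^ 2 + 1) * ((y + 1) ^ 2 + 1)))) by (field; simpl; nra).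
    rewrite Rabs_Ropp. rewrite Rabs_pos_eq by (apply Rlt_le, Rdiv_lt_0_compat; simpl; nra).
    apply div_le_div; simpl; nra. }
  apply Rle_trans with (a * (1 / (y * (y + 1)))).
  { apply Rmult_le_compat_l; lra. }
  replace (2 * (1 / a - 1 / b)) with (2 * (b - a) / (a * b)) by (field; lra).
  replace (y * (y + 1)) with ((a * a) * (b * b)) by (rewrite Haa, Hbb; ring).
  replace (a * (1 / (a * a * (b * b)))) with (1 / (a * b * b)) by (field; lra).
  apply div_le_div; try nra.
  assert ((b - a) * (b + a) = 1) by nra. assert (2 * (b - a) * b >= 1) by nra. assert (0 < a * b) by nra. nra.
Qed.

Lemma phipt t y : 0 < t -> t < y ->
  sqrt y * Rabs (1 / (y + 1 - t) - 1 / (y - t)) <= 2 * (sqrt y / (y - t) - sqrt (y + 1) / (y + 1 - t)).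
Proof.
  intros Ht Hy. destruct (sqrt_facts y ltac:(lra)) as [Ha Haa]. destruct (sqrt_facts (y + 1) ltac:(lra)) as [Hb Hbb].
  set (a := sqrt y) in *. set (b := sqrt (y + 1)) in *.
  assert (a <= b). { unfold a, b. apply sqrt_le_1_alt. lra. }
  replace (1 / (y + 1 - t) - 1 / (y - t)) with (- (1 / ((y - t) * (y - t + 1)))) by (field; lra).
  rewrite Rabs_Ropp, Rabs_pos_eq by (apply Rlt_le, Rdiv_lt_0_compat; nra).
  replace (a * (1 / ((y - t) * (y - t + 1)))) with (a / ((y - t) * (y - t + 1))) by (field; lra).
  replace (2 * (a / (y - t) - b / (y + 1 - t))) with (2 * (a * (y - t + 1) - b * (y - t)) / ((y - t) * (y - t + 1)))
    by (field; lra).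
  unfold Rdiv. apply Rmult_le_compat_r.
  { apply Rlt_le, Rinv_0_lt_compat; nra. }
  assert ((b - a) * (b + a) = 1) by nra.
  assert (2 * (y - t) * (b - a) <= a) by nra.
  nra.
Qed.

Lemma RG_tele' G A B : RG (fun m => G m - G (S m)) A B = G A - G B.
Proof. unfold RG. rewrite sumr_minus, sumr_minus. pose proof (sumr_tele G A). pose proof (sumr_tele G B).
  rewrite sumr_minus in H, H0. lra. Qed.

Lemma abs_sub_le x y : Rabs (x - y) <= Rabs x + Rabs y.
Proof. unfold Rminus. eapply Rle_trans. apply Rabs_triang. rewrite Rabs_Ropp. lra. Qed.

Lemma Err_sub F G a B : (S a <= B)%nat -> Err (fun m => F m - G m) a B <= Err F a B + Err G a B.
Proof.
  intros HB. unfold Err.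
  pose proof (sqrt_pos (INR B)). pose proof (sqrt_pos (INR a)).
  assert (sqrt (INR B) * Rabs (F B - G B) <= sqrt (INR B) * Rabs (F B) + sqrt (INR B) * Rabs (G B)).
  { rewrite <- Rmult_plus_distr_l. apply Rmult_le_compat_l; auto. apply abs_sub_le. }
  assert (sqrt (INR a) * Rabs (F (S a) - G (S a)) <= sqrt (INR a) * Rabs (F (S a)) + sqrt (INR a) * Rabs (G (S a))).
  { rewrite <- Rmult_plus_distr_l. apply Rmult_le_compat_l; auto. apply abs_sub_le. }
  assert (RG (fun m => sqrt (INR m) * Rabs (F (S m) - G (S m) - (F m - G m))) (S a) B <=
     RG (fun m => sqrt (INR m) * Rabs (F (S m) - F m)) (S a) B + RG (fun m => sqrt (INR m) * Rabs (G (S m) - G m)) (S a) B).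
  { rewrite <- RG_plus. apply RG_le; auto. intros m _. rewrite <- Rmult_plus_distr_l.
    apply Rmult_le_compat_l. apply sqrt_pos.
    replace (F (S m) - G (S m) - (F m - G m)) with ((F (S m) - F m) - (G (S m) - G m)) by ring.
    apply abs_sub_le. }
  lra.
Qed.

Lemma one_le_INR_S a : 1 <= INR (S a).
Proof. rewrite S_INR. pose proof (pos_INR a). lra. Qed.

Lemma Err_h a B : (S a <= B)%nat -> Err hf a B <= 4.
Proof.
  intros HB. unfold Err.
  assert (HB1 : 1 <= INR B) by (change 1 with (INR 1); apply le_INR; lia).
  assert (H1 : sqrt (INR B) * Rabs (hf B) <= 1) by (apply hpt1; auto).
  assert (H2 : sqrt (INR a) * Rabs (hf (S a)) <= 1).
  { apply Rle_trans with (sqrt (INR (S a)) * Rabs (hf (S a))).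
    apply Rmult_le_compat_r. apply Rabs_pos. apply sqrt_le_1_alt. apply le_INR; lia.
    apply hpt1. apply one_le_INR_S. }
  assert (H3 : RG (fun m => sqrt (INR m) * Rabs (hf (S m) - hf m)) (S a) B <=
      RG (fun m => 2 * (1 / sqrt (INR m) - 1 / sqrt (INR (S m)))) (S a) B).
  { apply RG_le; auto. intros m [Hm1 Hm2]. unfold hf. rewrite S_INR. apply hpt2.
    change 1 with (INR 1); apply le_INR; lia. }
  rewrite RG_scal, (RG_tele' (fun m => 1 / sqrt (INR m))) in H3.
  assert (1 / sqrt (INR (S a)) <= 1).
  { pose proof (one_le_INR_S a). assert (1 <= sqrt (INR (S a))) by (rewrite <- sqrt_1; apply sqrt_le_1_alt; lra).
    unfold Rdiv. rewrite Rmult_1_l. rewrite <- Rinv_1. apply Rinv_le_contravar; lra. }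
  assert (0 <= 1 / sqrt (INR B)).
  { apply Rlt_le, Rdiv_lt_0_compat. lra. apply sqrt_lt_R0; lra. }
  lra.
Qed.

Lemma Err_g_low t L : (1 <= L)%nat -> INR L < t -> Err (gf t) 0 L <= 2 * (sqrt (INR L) / (t - INR L)).
Proof.
  intros HL Ht. unfold Err.
  assert (HL1 : 1 <= INR L) by (change 1 with (INR 1); apply le_INR; lia).
  assert (E1 : sqrt (INR L) * Rabs (gf t L) = sqrt (INR L) / (t - INR L)).
  { unfold gf. replace (1 / (INR L - t)) with (- (1 / (t - INR L))) by (field; lra).
    rewrite Rabs_Ropp, Rabs_pos_eq. field. lra. apply Rlt_le, Rdiv_lt_0_compat; lra. }
  assert (E2 : sqrt (INR 0) * Rabs (gf t 1) = 0) by (simpl INR; rewrite sqrt_0; ring).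
  set (G := fun m : nat => 1 / (t - INR m)).
  assert (H3 : RG (fun m => sqrt (INR m) * Rabs (gf t (S m) - gf t m)) 1 L <=
      RG (fun m => sqrt (INR L) * (G (S m) - G m)) 1 L).
  { apply RG_le; auto. intros m [Hm1 Hm2].
    assert (INR (S m) <= INR L) by (apply le_INR; lia). rewrite S_INR in *.
    unfold gf, G. rewrite S_INR.
    assert (1 <= INR m) by (change 1 with (INR 1); apply le_INR; lia).
    replace (1 / (INR m + 1 - t) - 1 / (INR m - t)) with (- (1 / (t - (INR m + 1)) - 1 / (t - INR m))) by (field; lra).
    rewrite Rabs_Ropp. rewrite Rabs_pos_eq.
    - apply Rmult_le_compat_r.
      + apply Rge_le, Rge_minus, Rle_ge. apply div_le_div; lra.
      + apply sqrt_le_1_alt; lra.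
    - apply Rge_le, Rge_minus, Rle_ge. apply div_le_div; lra. }
  rewrite RG_scal, RG_tele in H3.
  unfold G in H3. simpl INR in H3.
  assert (0 < 1 / (t - 1)) by (apply Rdiv_lt_0_compat; lra).
  assert (0 <= sqrt (INR L)) by apply sqrt_pos.
  assert (sqrt (INR L) * (1 / (t - INR L) - 1 / (t - 1)) <= sqrt (INR L) / (t - INR L)).
  { unfold Rdiv. nra. }
  rewrite E1, E2. lra.
Qed.

Lemma Err_g_up t H N : (1 <= H)%nat -> 0 < t -> t < INR H -> (H <= N)%nat ->
  Err (gf t) (pred H) N <= 3 * (sqrt (INR H) / (INR H - t)).
Proof.
  intros HH Ht HtH HN. unfold Err.
  replace (S (pred H)) with H by lia.
  assert (HNt : INR H <= INR N) by (apply le_INR; auto).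
  set (phi := fun m : nat => sqrt (INR m) / (INR m - t)).
  assert (E1 : sqrt (INR N) * Rabs (gf t N) = phi N).
  { unfold gf, phi. rewrite Rabs_pos_eq. field. lra. apply Rlt_le, Rdiv_lt_0_compat; lra. }
  assert (E0 : 0 <= phi N).
  { unfold phi. apply Rdiv_le_0_compat. apply sqrt_pos. lra. }
  assert (E2 : sqrt (INR (pred H)) * Rabs (gf t H) <= phi H).
  { unfold gf, phi. rewrite Rabs_pos_eq by (apply Rlt_le, Rdiv_lt_0_compat; lra).
    replace (sqrt (INR H) / (INR H - t)) with (sqrt (INR H) * (1 / (INR H - t))) by (field; lra).
    apply Rmult_le_compat_r. apply Rlt_le, Rdiv_lt_0_compat; lra.
    apply sqrt_le_1_alt. apply le_INR; lia. }
  assert (H3 : RG (fun m => sqrt (INR m) * Rabs (gf t (S m) - gf t m)) H N <=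
      RG (fun m => 2 * (phi m - phi (S m))) H N).
  { apply RG_le; auto. intros m [Hm1 Hm2].
    assert (INR H <= INR m) by (apply le_INR; lia).
    unfold gf, phi. rewrite S_INR. apply phipt; lra. }
  rewrite RG_scal, RG_tele' in H3.
  rewrite E1. unfold phi in *. lra.
Qed.

Lemma RG_split F A B C : RG F A C = RG F A B + RG F B C.
Proof. unfold RG; ring. Qed.

Lemma ln_ratio p q : 0 < p -> 0 < q -> p <= 4 * q -> q <= 4 * p -> Rabs (ln p - ln q) <= 3.
Proof.
  intros Hp Hq H1 H2.
  pose proof (ln_le_sub1 (p / q) ltac:(apply Rdiv_lt_0_compat; lra)).
  pose proof (ln_le_sub1 (q / p) ltac:(apply Rdiv_lt_0_compat; lra)).
  rewrite ln_div in H, H0 by lra.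
  assert (p / q <= 4) by (apply (Rmult_le_reg_r q); auto; field_simplify; lra).
  assert (q / p <= 4) by (apply (Rmult_le_reg_r p); auto; field_simplify; lra).
  apply Rabs_le. lra.
Qed.

Definition ff (t : R) (m : nat) : R := 1 / (INR m - t) - INR m / (INR m ^ 2 + 1).

Lemma core_partial u v t L H N :
  100 <= sqrt v -> Rabs (u - t) <= sqrt v / 4 -> 4 * sqrt v <= u -> u <= 2 * (sqrt v * sqrt v) ->
  INR L < u - sqrt v <= INR L + 1 -> INR H - 1 <= u + sqrt v < INR H ->
  (H <= N)%nat -> 2 * t <= INR N + 1 ->
  Rabs (sumr (term u v t) (S N) + PI * ln t) <= 1000.
Proof.
  intros Hw Hut Huw Huv [HL1 HL2] [HH1 HH2] HN HNt.
  set (w := sqrt v) in *.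
  apply abs_le_inv in Hut.
  assert (Ht0 : 0 < t) by lra.
  assert (HLpos : (1 <= L)%nat).
  { destruct L. simpl in HL2. lra. lia. }
  assert (HLH : (L < H)%nat).
  { apply INR_lt. lra. }
  assert (HHpos : (1 <= H)%nat) by lia.
  assert (HL1' : 1 <= INR L) by (change 1 with (INR 1); apply le_INR; lia).
  assert (HtL : INR L < t) by lra.
  assert (HtH : t < INR H) by lra.
  assert (HNr : INR H <= INR N) by (apply le_INR; auto).
  assert (Dec : sumr (term u v t) (S N) =
     RG (fun m => rr m * ff t m) 1 (S L) + RG (fun m => rr m * ff t m) H (S N)).
  { replace (sumr (term u v t) (S N)) with (RG (term u v t) 0 (S N)) by (unfold RG; simpl; ring).
    rewrite (RG_split _ 0 1), (RG_split _ 1 (S L)), (RG_split _ (S L) H).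
    assert (RG (term u v t) 0 1 = 0).
    { unfold RG. simpl. unfold term. simpl. ring. }
    assert (RG (term u v t) (S L) H = 0).
    { transitivity (RG (fun _ => 0) (S L) H).
      - apply RG_ext. lia. intros m [Hm1 Hm2]. unfold term.
        destruct (Nat.ltb 0 m); auto.
        destruct (Rlt_dec (sqrt v) (Rabs (INR m - u))) as [h|h]; auto. exfalso.
        assert (INR L + 1 <= INR m) by (rewrite <- S_INR; apply le_INR; lia).
        assert (INR m + 1 <= INR H) by (rewrite <- S_INR; apply le_INR; lia).
        fold w in h. assert (Rabs (INR m - u) <= w) by (apply Rabs_le; lra). lra.
      - unfold RG. assert (Z0 : forall n, sumr (fun _ => 0) n = 0) by (induction n; simpl; lra). rewrite !Z0. ring. }
    assert (RG (term u v t) 1 (S L) = RG (fun m => rr m * ff t m) 1 (S L)).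
    { apply RG_ext. lia. intros m [Hm1 Hm2]. unfold term.
      replace (Nat.ltb 0 m) with true by (symmetry; apply Nat.ltb_lt; lia).
      destruct (Rlt_dec (sqrt v) (Rabs (INR m - u))) as [h|h]; [reflexivity|]. exfalso.
      assert (INR m <= INR L) by (apply le_INR; lia).
      apply h. fold w. rewrite Rabs_left by lra. lra. }
    assert (RG (term u v t) H (S N) = RG (fun m => rr m * ff t m) H (S N)).
    { apply RG_ext. lia. intros m [Hm1 Hm2]. unfold term.
      replace (Nat.ltb 0 m) with true by (symmetry; apply Nat.ltb_lt; lia).
      destruct (Rlt_dec (sqrt v) (Rabs (INR m - u))) as [h|h]; [reflexivity|]. exfalso.
      assert (INR H <= INR m) by (apply le_INR; lia).
      apply h. fold w. rewrite Rabs_right by lra. lra. }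
    lra. }
  assert (A1 : Rabs (RG (fun m => rr m * ff t m) 1 (S L) - PI * RG (ff t) 1 (S L)) <= 8 * Err (ff t) 0 L).
  { apply (abel_bound (ff t) 0 L). lia. }
  assert (A2 : Rabs (RG (fun m => rr m * ff t m) H (S N) - PI * RG (ff t) H (S N)) <= 8 * Err (ff t) (pred H) N).
  { pose proof (abel_bound (ff t) (pred H) N ltac:(lia)) as P. replace (S (pred H)) with H in P by lia. exact P. }
  assert (EL : Err (ff t) 0 L <= 2 * (sqrt (INR L) / (t - INR L)) + 4).
  { eapply Rle_trans. apply (Err_sub (gf t) hf). lia.
    pose proof (Err_g_low t L HLpos HtL). pose proof (Err_h 0 L ltac:(lia)). lra. }
  assert (EU : Err (ff t) (pred H) N <= 3 * (sqrt (INR H) / (INR H - t)) + 4).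
  { eapply Rle_trans. apply (Err_sub (gf t) hf). lia.
    pose proof (Err_g_up t H N HHpos Ht0 HtH HN). pose proof (Err_h (pred H) N ltac:(lia)). lra. }
  assert (SL : sqrt (INR L) <= 3 / 2 * w).
  { rewrite <- (sqrt_square (3 / 2 * w)) by lra. apply sqrt_le_1_alt. nra. }
  assert (SH : sqrt (INR H) <= 7 / 4 * w).
  { rewrite <- (sqrt_square (7 / 4 * w)) by lra. apply sqrt_le_1_alt. nra. }
  assert (PL : sqrt (INR L) / (t - INR L) <= 2).
  { apply (Rmult_le_reg_r (t - INR L)). lra. field_simplify; lra. }
  assert (PH : sqrt (INR H) / (INR H - t) <= 3).
  { apply (Rmult_le_reg_r (INR H - t)). lra. field_simplify; lra. }
  assert (M1 : RG (ff t) 1 (S L) = RG (gf t) 1 (S L) - RG hf 1 (S L)) by (rewrite <- RG_minus; reflexivity).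
  assert (M2 : RG (ff t) H (S N) = RG (gf t) H (S N) - RG hf H (S N)) by (rewrite <- RG_minus; reflexivity).
  pose proof (sum_g_low t L HtL) as S1. apply abs_le_inv in S1.
  pose proof (sum_g_up t H N HtH ltac:(lia)) as S2. apply abs_le_inv in S2.
  pose proof (sum_h 1 L ltac:(lia) ltac:(lia)) as S3. apply abs_le_inv in S3.
  pose proof (sum_h H N ltac:(lia) ltac:(lia)) as S4. apply abs_le_inv in S4.
  simpl INR in S3. rewrite ln_1 in S3.
  assert (I1 : 1 / (t - INR L) <= 1).
  { apply (Rmult_le_reg_r (t - INR L)). lra. field_simplify; lra. }
  assert (I2 : 1 / (INR H - t) <= 1).
  { apply (Rmult_le_reg_r (INR H - t)). lra. field_simplify; lra. }
  pose proof (ln_ratio (t - INR L) (INR H - t) ltac:(lra) ltac:(lra) ltac:(lra) ltac:(lra)) as R1.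
  pose proof (ln_ratio (INR N + 1 - t) (INR N + 1) ltac:(lra) ltac:(lra) ltac:(lra) ltac:(lra)) as R2.
  pose proof (ln_ratio (INR H) (INR L + 1) ltac:(lra) ltac:(lra) ltac:(lra) ltac:(lra)) as R3.
  apply abs_le_inv in R1. apply abs_le_inv in R2. apply abs_le_inv in R3.
  set (X := RG (ff t) 1 (S L) + RG (ff t) H (S N)).
  assert (HX : Rabs (X + ln t) <= 13).
  { apply Rabs_le. unfold X. rewrite M1, M2. lra. }
  assert (HPX : Rabs (PI * X + PI * ln t) <= 52).
  { rewrite <- Rmult_plus_distr_l, Rabs_mult, Rabs_pos_eq by (pose proof PI_RGT_0; lra).
    pose proof PI_4. pose proof PI_RGT_0. pose proof (Rabs_pos (X + ln t)). nra. }
  apply abs_le_inv in A1. apply abs_le_inv in A2. apply abs_le_inv in HPX.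
  rewrite Dec. apply Rabs_le. unfold X in HPX. lra.
Qed.

Lemma floor_nat y : 0 <= y -> exists n : nat, INR n <= y < INR n + 1.
Proof.
  intros Hy. destruct (archimed y) as [H1 H2].
  set (k := (up y - 1)%Z).
  assert (Hk : IZR k = IZR (up y) - 1) by (unfold k; rewrite minus_IZR; auto).
  assert (Hk0 : (0 <= k)%Z).
  { assert (-1 < IZR k) by lra. apply le_IZR. 
    destruct (Z_lt_le_dec k 0) as [h|h]; [|apply IZR_le; auto].
    assert (k <= -1)%Z by lia. apply IZR_le in H0. lra. }
  exists (Z.to_nat k). rewrite INR_IZR_INZ, Z2Nat.id by auto. lra.
Qed.

Lemma lower_nat x : 0 < x -> exists n : nat, INR n < x <= INR n + 1.
Proof.
  intros Hx. destruct (floor_nat x ltac:(lra)) as [n [H1 H2]].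
  destruct (Rle_lt_or_eq_dec _ _ H1) as [h|h].
  - exists n. lra.
  - destruct n. simpl in h. lra. exists n. rewrite S_INR in h. lra.
Qed.

Lemma sum_n_sumr (a : nat -> R) n : sum_n a n = sumr a (S n).
Proof.
  induction n. rewrite sum_O. simpl. ring.
  rewrite sum_Sn, IHn. unfold plus. simpl. ring.
Qed.

Lemma term_nonneg u v t m : 0 < t -> t < INR m -> 0 <= term u v t m.
Proof.
  intros Ht Hm. unfold term. destruct (Nat.ltb 0 m); [|lra].
  destruct (Rlt_dec (sqrt v) (Rabs (INR m - u))); [|lra].
  apply Rmult_le_pos. apply pos_INR.
  apply Rge_le, Rge_minus, Rle_ge. apply div_le_div. simpl; nra. lra. simpl; nra.
Qed.

Lemma core u v t :
  100 <= sqrt v -> Rabs (u - t) <= sqrt v / 4 -> 4 * sqrt v <= u -> u <= 2 * (sqrt v * sqrt v) ->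
  exists S : R, is_series (term u v t) S /\ Rabs (S + PI * ln t) <= 1000.
Proof.
  intros Hw Hut Huw Huv.
  pose proof (abs_le_inv _ _ Hut) as Hut'.
  assert (Ht0 : 0 < t) by lra.
  destruct (lower_nat (u - sqrt v) ltac:(lra)) as [L HL].
  destruct (floor_nat (u + sqrt v) ltac:(lra)) as [H0 HH0].
  set (H := S H0).
  assert (HH : INR H - 1 <= u + sqrt v < INR H) by (unfold H; rewrite S_INR; lra).
  destruct (floor_nat (2 * t) ltac:(lra)) as [N1 HN1].
  set (N0 := Nat.max H N1).
  assert (Bnd : forall k, Rabs (sumr (term u v t) (S (k + N0)) + PI * ln t) <= 1000).
  { intros k. apply (core_partial u v t L H (k + N0)); auto. lia.
    assert (INR N1 <= INR (k + N0)) by (apply le_INR; lia). lra. }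
  set (Q := fun k => sumr (term u v t) (S (k + N0))).
  assert (Hinc : forall k, Q k <= Q (S k)).
  { intros k. unfold Q. replace (S (S k + N0)) with (S (S (k + N0))) by lia.
    change (sumr (term u v t) (S (S (k + N0)))) with (sumr (term u v t) (S (k + N0)) + term u v t (S (k + N0))).
    cut (0 <= term u v t (S (k + N0))). lra. apply term_nonneg; auto.
    assert (INR H <= INR (S (k + N0))) by (apply le_INR; lia). lra. }
  destruct (ex_finite_lim_seq_incr Q (1000 - PI * ln t) Hinc) as [l Hl].
  { intros k. pose proof (abs_le_inv _ _ (Bnd k)). unfold Q. lra. }
  exists l. split.
  - apply (is_lim_seq_incr_n (fun n => sumr (term u v t) (S n)) N0 l) in Hl.
    assert (is_lim_seq (sum_n (term u v t)) l).
    { apply (is_lim_seq_ext (fun n => sumr (term u v t) (S n))). intros; rewrite sum_n_sumr; auto. auto. }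
    exact H1.
  - assert (Up : Rbar_le l (1000 - PI * ln t)).
    { apply (is_lim_seq_le Q (fun _ => 1000 - PI * ln t) l (1000 - PI * ln t)); auto.
      intros k. pose proof (abs_le_inv _ _ (Bnd k)). unfold Q. lra. apply is_lim_seq_const. }
    assert (Lo : Rbar_le (-1000 - PI * ln t) l).
    { apply (is_lim_seq_le (fun _ => -1000 - PI * ln t) Q (-1000 - PI * ln t) l); auto.
      intros k. pose proof (abs_le_inv _ _ (Bnd k)). unfold Q. lra. apply is_lim_seq_const. }
    simpl in Up, Lo. apply Rabs_le. lra.
Qed.

Theorem lemma3p3 :
  exists C V0 : R, forall u v t : R,
    V0 <= u -> V0 <= v ->
    Rpower v (9 / 10) <= u -> u <= 2 * v ->
    1 < t ->
    ~ (exists m : nat, t = INR m /\ (0 < r2 m)%nat) ->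
    Rabs (u - t) <= Rpower v (1 / 3) ->
    exists S : R, is_series (term u v t) S /\ Rabs (S + PI * ln t) <= C.
Proof.
  exists 1000, (exp 60). intros u v t Hu Hv H910 Hu2 Ht1 _ Hut.
  assert (Hv0 : 0 < v) by (pose proof (exp_pos 60); lra).
  assert (Hlv : 60 <= ln v).
  { rewrite <- (ln_exp 60). destruct (Rle_lt_or_eq_dec _ _ Hv) as [h|h].
    left. apply ln_increasing; auto. apply exp_pos. rewrite h. lra. }
  set (lv := ln v) in *.
  assert (Hw : sqrt v = exp (lv / 2)).
  { rewrite <- Rpower_sqrt by auto. unfold Rpower. f_equal. unfold lv. field. }
  assert (E1 : exp (lv / 2) = exp (1 / 3 * lv) * exp (lv / 6)).
  { rewrite <- exp_plus. f_equal. field. }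
  assert (E2 : exp (9 / 10 * lv) = exp (lv / 2) * exp (2 / 5 * lv)).
  { rewrite <- exp_plus. f_equal. field. }
  assert (E3 : exp (lv / 2) = exp (lv / 4) * exp (lv / 4)).
  { rewrite <- exp_plus. f_equal. field. }
  pose proof (exp_ineq1_le (lv / 6)). pose proof (exp_ineq1_le (2 / 5 * lv)).
  pose proof (exp_ineq1_le (lv / 4)).
  pose proof (exp_pos (1 / 3 * lv)). pose proof (exp_pos (lv / 2)).
  unfold Rpower in H910, Hut. fold lv in H910, Hut.
  apply core.
  - rewrite Hw, E3. nra.
  - rewrite Hw. rewrite E1. nra.
  - rewrite Hw. rewrite E2 in H910. nra.
  - rewrite sqrt_sqrt by lra. lra.
Qed.
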